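(* Let $\lambda\in\mathbb{R}$, let $n$ be a positive integer and let $k$ be a positive integer. Then \[ S_{k,\lambda}(n)=\frac{(n+1)_{k+1,\lambda}-(1)_{k+1,\lambda}}{k+1}-\frac{1}{k+1}\sum_{r=0}^{k-1}\binom{k+1}{r}(1)_{k+1-r,\lambda}\,S_{r,\lambda}(n). \]
   Context: For $\lambda\in\mathbb{R}$ the degenerate falling factorials are $(x)_{0,\lambda}=1$ and $(x)_{m,\lambda}=x(x-\lambda)(x-2\lambda)\cdots(x-(m-1)\lambda)$ for $m\ge 1$. For a nonnegative integer $r$ and positive integer $n$, $S_{r,\lambda}(n)=\sum_{j=1}^{n}(j)_{r,\lambda}=(1)_{r,\lambda}+(2)_{r,\lambda}+\cdots+(n)_{r,\lambda}$ (so in particular $S_{0,\lambda}(n)=n$). *)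

(* Defs.v *)
From mathcomp Require Import all_boot all_order all_algebra.
Set Implicit Arguments. Unset Strict Implicit. Unset Printing Implicit Defensive.
Import Order.TTheory GRing.Theory Num.Theory.
Local Open Scope ring_scope.

Definition dff {R : pzRingType} (lambda x : R) (m : nat) : R :=
  \prod_(i < m) (x - i%:R * lambda).

Definition Sdeg {R : pzRingType} (lambda : R) (r n : nat) : R :=
  \sum_(1 <= j < n.+1) dff lambda j%:R r.

(* Main.v *)
Require Import Defs.
From mathcomp Require Import all_boot all_order all_algebra.
From mathcomp Require Import ring.
Import Order.TTheory GRing.Theory Num.Theory.
Local Open Scope ring_scope.

Lemma dffS (R : comNzRingType) (l x : R) m : dff l x m.+1 = dff l x m * (x - m%:R * l).
Proof. by rewrite /dff big_ord_recr. Qed.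

Lemma dff0 (R : comNzRingType) (l x : R) : dff l x 0 = 1.
Proof. by rewrite /dff big_ord0. Qed.

Lemma dff_binom (R : comNzRingType) (l x y : R) m :
  dff l (x + y) m = \sum_(i < m.+1) 'C(m, i)%:R * dff l x i * dff l y (m - i).
Proof.
elim: m => [|m IH].
  by rewrite big_ord_recl big_ord0 !dff0 /= mul1r mulr1 addr0.
rewrite dffS IH big_distrl /=.
have E : forall i : 'I_m.+1, 'C(m, i)%:R * dff l x i * dff l y (m - i) * (x + y - m%:R * l)
   = 'C(m, i)%:R * dff l x i.+1 * dff l y (m - i) + 'C(m, i)%:R * dff l x i * dff l y (m.+1 - i).
  move=> i; have hi : (i <= m)%N by rewrite -ltnS ltn_ord.
  rewrite subSn // !dffS (natrB _ hi); ring.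
rewrite (eq_bigr _ (fun i _ => E i)) big_split /=.
rewrite [in RHS]big_ord_recl /= bin0 subn0.
rewrite [in RHS](eq_bigr (fun j : 'I_m.+1 => 'C(m, j)%:R * dff l x j.+1 * dff l y (m - j)
     + 'C(m, j.+1)%:R * dff l x j.+1 * dff l y (m - j))); last first.
  by move=> j _; rewrite /bump /= add1n binS natrD subSS; ring.
rewrite big_split /= [X in _ + X = _]big_ord_recl /= bin0 subn0.
rewrite [X in _ = _ + (_ + X)](_ : _ = \sum_(i < m) 'C(m, i.+1)%:R * dff l x i.+1 * dff l y (m - i)).
  rewrite /bump /=. under [X in _ + (_ + X) = _]eq_bigr => i _ do rewrite (_ : (1 + i)%N = i.+1) // subSS. ring.
rewrite big_ord_recr /= bin_small // mul0r mul0r addr0.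
by [].
Qed.

Theorem theorem2p3 (R : realFieldType) (lambda : R) (n k : nat)
  (hn : (0 < n)%N) (hk : (0 < k)%N) :
  Sdeg lambda k n =
    (dff lambda (n.+1)%:R k.+1 - dff lambda 1 k.+1) / (k.+1)%:R
    - (k.+1)%:R^-1 *
      \sum_(0 <= r < k) ('C(k.+1, r))%:R * dff lambda 1 (k.+1 - r) * Sdeg lambda r n.
Proof.
set l := lambda.
have T : forall j : nat, dff l j.+1%:R k.+1 - dff l j%:R k.+1 =
   \sum_(r < k.+1) 'C(k.+1, r)%:R * dff l 1 (k.+1 - r) * dff l j%:R r.
  move=> j; rewrite -natr1 dff_binom big_ord_recr /= subnn dff0 binn mul1r mulr1 addrK.
  by apply: eq_bigr => r _; rewrite mulrAC.
have K : \sum_(r < k.+1) 'C(k.+1, r)%:R * dff l 1 (k.+1 - r) * Sdeg l r n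
     = dff l (n.+1)%:R k.+1 - dff l 1 k.+1.
  rewrite /Sdeg.
  under eq_bigr => r _ do rewrite mulr_sumr.
  rewrite exchange_big /=.
  apply: (telescope_sumr_eq (fun j => dff l j%:R k.+1)) => // j _.
move: K; rewrite big_ord_recr /= subSn // subnn binSn.
rewrite big_mkord.
have h1 : dff l 1 1 = 1 by rewrite /dff big_ord1 mul0r subr0.
rewrite h1 => K; rewrite -K.
have hk0 : (k.+1)%:R != 0 :> R by rewrite pnatr_eq0.
field; by rewrite addrC natr1.
Qed.
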